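(* For $\lambda>0$ let $\zeta_\lambda(z)=\lambda\frac{z}{z+1}e^{-z}$, and consider its restriction $\zeta_\lambda(x)$ to real $x\neq -1$. Let $\lambda^{*}=(\sqrt{2}+1)e^{\sqrt{2}}$. Then: (i) If $0<\lambda<1$, then $\zeta_\lambda$ has a unique nonzero real fixed point $r_\lambda$, it lies in $(-1,0)$ and is repelling, and the fixed point $0$ is attracting. (ii) If $\lambda=1$, then the fixed point $0$ is rationally indifferent. (iii) If $1<\lambda<\lambda^{*}$, then $\zeta_\lambda$ has a unique nonzero real fixed point $a_\lambda$, it lies in $(0,\sqrt{2})$ and is attracting, and the fixed point $0$ is repelling. (iv) If $\lambda=\lambda^{*}$, then $\sqrt{2}$ is a rationally indifferent fixed point and the fixed point $0$ is repelling. (v) If $\lambda>\lambda^{*}$, then the fixed point $0$ is repelling.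
   Context: A fixed point $x_f$ of $\zeta_\lambda$ is called attracting if $|\zeta_\lambda'(x_f)|<1$, repelling if $|\zeta_\lambda'(x_f)|>1$, and rationally indifferent if $\zeta_\lambda'(x_f)$ is a root of unity (here, $|\zeta_\lambda'(x_f)|=1$ with real multiplier). *)

(* Defs.v *)
From Stdlib Require Import Reals.
Open Scope R_scope.

Definition zeta (lam x : R) : R := lam * (x / (x + 1)) * exp (- x).

Definition is_fixed (lam x : R) : Prop := x <> -1 /\ zeta lam x = x.

Definition attracting (lam x : R) : Prop :=
  is_fixed lam x /\ exists d, derivable_pt_lim (zeta lam) x d /\ Rabs d < 1.

Definition repelling (lam x : R) : Prop :=
  is_fixed lam x /\ exists d, derivable_pt_lim (zeta lam) x d /\ Rabs d > 1.

Definition rationally_indifferent (lam x : R) : Prop :=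
  is_fixed lam x /\
  exists d, derivable_pt_lim (zeta lam) x d /\ exists n : nat, (0 < n)%nat /\ d ^ n = 1.

Definition lambda_star : R := (sqrt 2 + 1) * exp (sqrt 2).

(* Main.v *)
Require Import Defs.
From Stdlib Require Import Reals Lra Lia.
From Coquelicot Require Import Coquelicot.
Open Scope R_scope.

Lemma zeta_deriv lam x : x <> -1 ->
  derivable_pt_lim (zeta lam) x (lam*exp(-x)*(1 - x*(x+1))/(x+1)^2).
Proof.
  intro H. assert (H1 : x + 1 <> 0) by lra.
  apply is_derive_Reals. unfold zeta.
  auto_derive. exact H1. field. exact H1.
Qed.

Lemma fixed_eq lam x : x <> -1 -> x <> 0 -> zeta lam x = x -> lam*exp(-x) = x+1.
Proof.
  intros H H0 Hz. unfold zeta in Hz. assert (H1 : x + 1 <> 0) by lra.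
  apply (Rmult_eq_reg_l (x / (x+1))). idtac.
  - transitivity x. transitivity (lam * (x / (x + 1)) * exp (- x)). ring. exact Hz. field. exact H1.
  - intro Hc. apply H0. unfold Rdiv in Hc. apply Rmult_integral in Hc.
    destruct Hc as [Hc|Hc]; auto. exfalso; apply (Rinv_neq_0_compat _ H1); auto.
Qed.

Lemma fixed_of_eq lam x : x <> -1 -> lam*exp(-x) = x+1 -> is_fixed lam x.
Proof.
  intros H E. split; auto. unfold zeta. assert (H1 : x + 1 <> 0) by lra.
  replace (lam * (x / (x + 1)) * exp (- x)) with ((lam*exp(-x)) * (x/(x+1))) by ring.
  rewrite E. field. exact H1.
Qed.

Lemma eq_g lam x : lam*exp(-x) = x+1 -> lam = (x+1)*exp x.
Proof.
  intro E. rewrite <- E, exp_Ropp. field. apply Rgt_not_eq, exp_pos.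
Qed.

Lemma g_pos lam x : 0 < lam -> lam*exp(-x) = x+1 -> -1 < x.
Proof. intros Hl E. pose proof (Rmult_lt_0_compat _ _ Hl (exp_pos (-x))). lra. Qed.

Lemma g_strict x y : -1 < x -> x < y -> (x+1)*exp x < (y+1)*exp y.
Proof.
  intros Hx Hxy. pose proof (exp_increasing _ _ Hxy). pose proof (exp_pos x). nra.
Qed.

Lemma uniq lam y r : 0 < lam -> is_fixed lam y -> y <> 0 -> lam*exp(-r) = r+1 -> y = r.
Proof.
  intros Hl [Hy Hz] H0 Er. pose proof (fixed_eq _ _ Hy H0 Hz) as Ey.
  pose proof (g_pos _ _ Hl Ey). pose proof (g_pos _ _ Hl Er).
  pose proof (eq_g _ _ Ey). pose proof (eq_g _ _ Er).
  destruct (Rtotal_order y r) as [h|[h|h]]; auto.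
  - pose proof (g_strict y r ltac:(lra) h). lra.
  - pose proof (g_strict r y ltac:(lra) h). lra.
Qed.

Lemma mult_at lam x : x <> -1 -> lam*exp(-x) = x+1 ->
  derivable_pt_lim (zeta lam) x ((1 - x*(x+1))/(x+1)).
Proof.
  intros H E. assert (H1 : x + 1 <> 0) by lra.
  replace ((1 - x*(x+1))/(x+1)) with (lam*exp(-x)*(1 - x*(x+1))/(x+1)^2).
  apply zeta_deriv; auto. rewrite E. field. exact H1.
Qed.

Lemma zero_fixed lam : is_fixed lam 0.
Proof. split. lra. unfold zeta. unfold Rdiv. ring. Qed.

Lemma zero_deriv lam : derivable_pt_lim (zeta lam) 0 lam.
Proof.
  replace lam with (lam*exp(-0)*(1 - 0*(0+1))/(0+1)^2) at 2.
  apply zeta_deriv; lra. rewrite Ropp_0, exp_0. field.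
Qed.

Lemma exist_root lam a b : a < b -> (a+1)*exp a < lam < (b+1)*exp b ->
  exists r, a < r < b /\ lam*exp(-r) = r+1.
Proof.
  intros Hab [H1 H2].
  destruct (IVT (fun x => (x+1)*exp x - lam) a b) as [z [Hz Ez]].
  - reg.
  - exact Hab.
  - lra.
  - lra.
  - exists z. assert (lam = (z+1)*exp z) by lra.
    split. split.
    + destruct (Req_dec a z) as [e|e]; [subst; lra | lra].
    + destruct (Req_dec z b) as [e|e]; [subst; lra | lra].
    + subst lam. rewrite exp_Ropp. field. apply Rgt_not_eq, exp_pos.
Qed.

Lemma sqrt2_facts : 0 < sqrt 2 /\ sqrt 2 * sqrt 2 = 2.
Proof. split. apply sqrt_lt_R0; lra. apply sqrt_sqrt; lra. Qed.

Lemma lstar_gt1 : 1 < lambda_star.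
Proof.
  destruct sqrt2_facts as [h _]. unfold lambda_star.
  pose proof (exp_pos (sqrt 2)).
  assert (1 < exp (sqrt 2)) by (rewrite <- exp_0; apply exp_increasing; lra). nra.
Qed.

Lemma lstar_eq : lambda_star * exp (- sqrt 2) = sqrt 2 + 1.
Proof.
  unfold lambda_star. rewrite exp_Ropp. field. apply Rgt_not_eq, exp_pos.
Qed.

Lemma rep0 lam : 1 < lam -> repelling lam 0.
Proof.
  intro h. split. apply zero_fixed. exists lam. split. apply zero_deriv.
  rewrite Rabs_right; lra.
Qed.

Theorem theorem3 :
  (forall lam, 0 < lam < 1 ->
     (exists r, is_fixed lam r /\ r <> 0 /\
        (forall y, is_fixed lam y -> y <> 0 -> y = r) /\
        -1 < r < 0 /\ repelling lam r) /\
     attracting lam 0) /\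
  rationally_indifferent 1 0 /\
  (forall lam, 1 < lam < lambda_star ->
     (exists a, is_fixed lam a /\ a <> 0 /\
        (forall y, is_fixed lam y -> y <> 0 -> y = a) /\
        0 < a < sqrt 2 /\ attracting lam a) /\
     repelling lam 0) /\
  (rationally_indifferent lambda_star (sqrt 2) /\ repelling lambda_star 0) /\
  (forall lam, lam > lambda_star -> repelling lam 0).
Proof.
  pose proof lstar_gt1 as L1. destruct sqrt2_facts as [s0 s2].
  split; [|split; [|split; [|split]]].
  - intros lam [h0 h1]. split.
    + destruct (exist_root lam (-1) 0) as [r [Hr E]]. lra.
      { rewrite exp_0. replace (-1+1) with 0 by ring. lra. }
      exists r. split; [apply fixed_of_eq; auto; lra|]. split; [lra|].
      split; [intros y Hy Hy0; apply (uniq lam); auto|]. split; [lra|].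
      split; [apply fixed_of_eq; auto; lra|].
      exists ((1 - r*(r+1))/(r+1)). split. apply mult_at; auto; lra.
      assert (1 < (1 - r*(r+1))/(r+1)).
      { apply (Rmult_lt_reg_r (r+1)). lra. unfold Rdiv.
        rewrite Rmult_assoc, Rinv_l by lra. nra. }
      rewrite Rabs_right; lra.
    + split. apply zero_fixed. exists lam. split. apply zero_deriv.
      rewrite Rabs_right; lra.
  - split. apply zero_fixed. exists 1. split. apply zero_deriv.
    exists 1%nat. split. lia. ring.
  - intros lam [h0 h1]. split; [|apply rep0; lra].
    destruct (exist_root lam 0 (sqrt 2)) as [r [Hr E]]. lra.
    { rewrite exp_0. split. lra. exact h1. }
    exists r. split; [apply fixed_of_eq; auto; lra|]. split; [lra|].
    split; [intros y Hy Hy0; apply (uniq lam); auto; lra|]. split; [lra|].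
    split; [apply fixed_of_eq; auto; lra|].
    exists ((1 - r*(r+1))/(r+1)). split. apply mult_at; auto; lra.
    assert (r * r < 2) by nra.
    assert (-1 < (1 - r*(r+1))/(r+1) < 1).
    { split; apply (Rmult_lt_reg_r (r+1)); try lra; unfold Rdiv;
      rewrite Rmult_assoc, Rinv_l by lra; nra. }
    apply Rabs_def1; lra.
  - split; [|apply rep0; lra].
    split. apply fixed_of_eq. lra. apply lstar_eq.
    exists ((1 - sqrt 2*(sqrt 2+1))/(sqrt 2+1)). split.
    apply mult_at. lra. apply lstar_eq.
    exists 2%nat. split. lia.
    replace ((1 - sqrt 2*(sqrt 2+1))/(sqrt 2+1)) with (-1). ring.
    field_simplify_eq; [nra| lra].
  - intros lam h. apply rep0; lra.
Qed.
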